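(* For the system $$u_{0,0}-v_{1,1}=0,\qquad (u_{1,0}-u_{0,0})(v_{1,0}-u_{0,0})-(u_{0,1}-u_{0,0})(v_{0,1}-u_{0,0})=0,$$ the following second order flow is a symmetry: $$\frac{\partial u_{0,0}}{\partial t_2}=\frac{u_{0,0}-v_{1,0}}{(u_{-1,0}-v_{1,0})^2}\left(\frac{u_{0,0}-u_{-1,0}}{v_{2,0}-u_{0,0}}+\frac{u_{-1,0}-v_{0,0}}{v_{0,0}-u_{-2,0}}+1\right),$$ $$\frac{\partial v_{0,0}}{\partial t_2}=\frac{u_{-1,0}-v_{0,0}}{(u_{-1,0}-v_{1,0})^2}\left(\frac{u_{0,0}-v_{1,0}}{v_{2,0}-u_{0,0}}+\frac{v_{1,0}-v_{0,0}}{v_{0,0}-u_{-2,0}}+1\right).$$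
   Context: Unknowns $u,v$ on $\mathbb Z^2$, $u_{i,j}=u(n+i,m+j)$, similarly $v$. Shifts $\mathcal S:n\mapsto n+1$, $\mathcal T:m\mapsto m+1$. For a quad system $\boldsymbol Q(\boldsymbol u_{0,0},\boldsymbol u_{1,0},\boldsymbol u_{0,1},\boldsymbol u_{1,1})=\boldsymbol 0$ with $\boldsymbol u=(u,v)$ and Jacobians $\mathrm Q_{(p,q)}=\partial\boldsymbol Q/\partial\boldsymbol u_{p,q}$, a vector function $\boldsymbol F=(F^{(1)},F^{(2)})$ of finitely many shifts of $\boldsymbol u$ is a symmetry, written $\partial_t u_{0,0}=F^{(1)}$, $\partial_t v_{0,0}=F^{(2)}$, if $\mathrm Q_{(0,0)}\boldsymbol F+\mathrm Q_{(1,0)}\mathcal S(\boldsymbol F)+\mathrm Q_{(0,1)}\mathcal T(\boldsymbol F)+\mathrm Q_{(1,1)}\mathcal S\mathcal T(\boldsymbol F)=\boldsymbol 0$ holds on all solutions of the system. *)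

(* Defs.v *)
From HB Require Import structures.
From mathcomp Require Import all_boot all_order all_algebra.
Set Implicit Arguments. Unset Strict Implicit. Unset Printing Implicit Defensive.
Import Order.TTheory GRing.Theory Num.Theory.
Local Open Scope ring_scope.

Section QuadDefs.
Variable R : numFieldType.

Definition field := int -> int -> R.

Definition mx2 (a b c d : R) : 'M[R]_2 :=
  \matrix_(i < 2, j < 2)
    (if (i : nat) == 0%N then (if (j : nat) == 0%N then a else b)
     else (if (j : nat) == 0%N then c else d)).
Definition cv2 (a b : R) : 'cV[R]_2 :=
  \col_(i < 2) (if (i : nat) == 0%N then a else b).

Definition Q1 (u00 v00 u10 v10 u01 v01 u11 v11 : R) : R := u00 - v11.
Definition Q2 (u00 v00 u10 v10 u01 v01 u11 v11 : R) : R :=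
  (u10 - u00) * (v10 - u00) - (u01 - u00) * (v01 - u00).

Definition is_solution (u v : field) : Prop :=
  forall n m : int,
    Q1 (u n m) (v n m) (u (n+1) m) (v (n+1) m) (u n (m+1)) (v n (m+1))
       (u (n+1) (m+1)) (v (n+1) (m+1)) = 0 /\
    Q2 (u n m) (v n m) (u (n+1) m) (v (n+1) m) (u n (m+1)) (v n (m+1))
       (u (n+1) (m+1)) (v (n+1) (m+1)) = 0.

(* Jacobians Q_(p,q) = dQ/d(u_pq, v_pq): rows = (Q1, Q2), columns = (u_pq, v_pq).
   These are the literal partial derivatives of the polynomials Q1, Q2 above. *)
Definition Jac00 (u00 v00 u10 v10 u01 v01 u11 v11 : R) : 'M[R]_2 :=
  mx2 1 0 (- (v10 - u00) - (u10 - u00) + (v01 - u00) + (u01 - u00)) 0.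
Definition Jac10 (u00 v00 u10 v10 u01 v01 u11 v11 : R) : 'M[R]_2 :=
  mx2 0 0 (v10 - u00) (u10 - u00).
Definition Jac01 (u00 v00 u10 v10 u01 v01 u11 v11 : R) : 'M[R]_2 :=
  mx2 0 0 (- (v01 - u00)) (- (u01 - u00)).
Definition Jac11 (u00 v00 u10 v10 u01 v01 u11 v11 : R) : 'M[R]_2 :=
  mx2 0 (-1) 0 0.

Definition flow := field -> field -> int -> int -> 'cV[R]_2.

(* The symmetry condition, evaluated at (n, m):
   Q_(0,0) F + Q_(1,0) S(F) + Q_(0,1) T(F) + Q_(1,1) S T(F). *)
Definition sym_expr (F : flow) (u v : field) (n m : int) : 'cV[R]_2 :=
  let a := (u n m, v n m, u (n+1) m, v (n+1) m, u n (m+1), v n (m+1),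
            u (n+1) (m+1), v (n+1) (m+1)) in
  let '(u00, v00, u10, v10, u01, v01, u11, v11) := a in
  Jac00 u00 v00 u10 v10 u01 v01 u11 v11 *m F u v n m
  + Jac10 u00 v00 u10 v10 u01 v01 u11 v11 *m F u v (n+1) m
  + Jac01 u00 v00 u10 v10 u01 v01 u11 v11 *m F u v n (m+1)
  + Jac11 u00 v00 u10 v10 u01 v01 u11 v11 *m F u v (n+1) (m+1).

Definition flow_t2 : flow := fun u v n m =>
  let U i := u (n + i) m in
  let V i := v (n + i) m in
  cv2
    ((U 0 - V 1) / (U (-1) - V 1) ^+ 2 *
       ((U 0 - U (-1)) / (V 2 - U 0) + (U (-1) - V 0) / (V 0 - U (-2)) + 1))
    ((U (-1) - V 0) / (U (-1) - V 1) ^+ 2 *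
       ((U 0 - V 1) / (V 2 - U 0) + (V 1 - V 0) / (V 0 - U (-2)) + 1)).

Definition flow_t2_defined (u v : field) : Prop :=
  forall n m : int,
    u (n - 1) m != v (n + 1) m /\ v (n + 2) m != u n m /\ v n m != u (n - 2) m.

End QuadDefs.

(* Main.v *)
Require Import Defs.
From mathcomp Require Import all_boot all_order all_algebra.
From mathcomp Require Import ring.
Import GRing.Theory Num.Theory.
Local Open Scope ring_scope.

Section S.
Variable R : numFieldType.
Definition f1 (U0 Um1 Um2 V0 V1 V2 : R) :=
  (U0 - V1) / (Um1 - V1) ^+ 2 * ((U0 - Um1) / (V2 - U0) + (Um1 - V0) / (V0 - Um2) + 1).
Definition f2 (U0 Um1 Um2 V0 V1 V2 : R) :=
  (Um1 - V0) / (Um1 - V1) ^+ 2 * ((U0 - V1) / (V2 - U0) + (V1 - V0) / (V0 - Um2) + 1).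

Lemma nzP {P H D : R} : H != 0 -> D != 0 -> P = D * H -> P != 0.
Proof. by move=> ? ? ->; rewrite mulf_neq0. Qed.
Lemma nzN {P H D : R} : H != 0 -> D != 0 -> P = - (D * H) -> P != 0.
Proof. by move=> ? ? ->; rewrite oppr_eq0 mulf_neq0. Qed.

Ltac closeands := repeat (apply/andP; split); try assumption.
Ltac side1 :=
  first [ assumption
        | match goal with
          | h : is_true (?H != 0), dn : is_true (?D != 0) |- _ =>
              first [ apply: (nzP h dn); field; closeands; fail
                    | apply: (nzP h dn); solve [field; closeands]
                    | apply: (nzN h dn); solve [field; closeands] ]
          end ].
Ltac sides := repeat (apply/andP; split); side1.

Lemma row1_gen (xm2 xm1 x0 x1 x2 ym1 y0 y1 zm1 z0 z1 : R) :
  xm2 - xm1 != 0 -> xm1 - x0 != 0 -> x0 - x1 != 0 ->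
  zm1 = xm1 + (x0 - xm1) * (ym1 - xm1) / (xm2 - xm1) ->
  z0 = x0 + (x1 - x0) * (y0 - x0) / (xm1 - x0) ->
  z1 = x1 + (x2 - x1) * (y1 - x1) / (x0 - x1) ->
  xm1 - y0 != 0 -> y1 - x0 != 0 -> ym1 - xm2 != 0 ->
  z0 - x1 != 0 -> x2 - z1 != 0 -> x0 - zm1 != 0 ->
  f1 x0 xm1 xm2 ym1 y0 y1 = f2 z1 z0 zm1 x0 x1 x2.
Proof.
move=> d1 d2 d3 -> -> -> h1 h2 h3 h4 h5 h6.
rewrite /f1 /f2.
field; sides.
Qed.

Lemma row2_gen (xm3 xm2 xm1 x0 x1 ym2 ym1 y0 y1 y2 zm2 zm1 z0 : R) :
  xm3 - xm2 != 0 -> xm2 - xm1 != 0 -> xm1 - x0 != 0 ->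
  zm2 = xm2 + (xm1 - xm2) * (ym2 - xm2) / (xm3 - xm2) ->
  zm1 = xm1 + (x0 - xm1) * (ym1 - xm1) / (xm2 - xm1) ->
  z0 = x0 + (x1 - x0) * (y0 - x0) / (xm1 - x0) ->
  xm1 - y0 != 0 -> y1 - x0 != 0 -> ym1 - xm2 != 0 ->
  x0 - y1 != 0 -> y2 - x1 != 0 -> y0 - xm1 != 0 ->
  zm1 - x0 != 0 -> x1 - z0 != 0 -> xm1 - zm2 != 0 ->
  (- (y0 - x0) - (x1 - x0) + (xm1 - x0) + (z0 - x0)) * f1 x0 xm1 xm2 ym1 y0 y1
  + (y0 - x0) * f1 x1 x0 xm1 y0 y1 y2 + (x1 - x0) * f2 x1 x0 xm1 y0 y1 y2
  - (xm1 - x0) * f1 z0 zm1 zm2 xm1 x0 x1 - (z0 - x0) * f2 z0 zm1 zm2 xm1 x0 x1 = 0.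
Proof.
move=> d1 d2 d3 -> -> -> h1 h2 h3 h4 h5 h6 h7 h8 h9.
rewrite /f1 /f2.
field; sides.
Qed.

Lemma row1_deg (c ym1 y0 y1 zm1 z0 z1 : R) :
  c - y0 != 0 -> y1 - c != 0 -> ym1 - c != 0 ->
  z0 - c != 0 -> c - z1 != 0 -> c - zm1 != 0 ->
  f1 c c c ym1 y0 y1 = f2 z1 z0 zm1 c c c.
Proof. move=> *; rewrite /f1 /f2; field; sides. Qed.

Lemma row2_deg (c ym1 y0 y1 y2 zm2 zm1 z0 : R) :
  c - y0 != 0 -> y1 - c != 0 -> ym1 - c != 0 ->
  c - y1 != 0 -> y2 - c != 0 -> y0 - c != 0 ->
  zm1 - c != 0 -> c - z0 != 0 -> c - zm2 != 0 ->
  (- (y0 - c) - (c - c) + (c - c) + (z0 - c)) * f1 c c c ym1 y0 y1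
  + (y0 - c) * f1 c c c y0 y1 y2 + (c - c) * f2 c c c y0 y1 y2
  - (c - c) * f1 z0 zm1 zm2 c c c - (z0 - c) * f2 z0 zm1 zm2 c c c = 0.
Proof. move=> *; rewrite /f1 /f2; field; sides. Qed.

Lemma solz {z x N d : R} : d != 0 -> N - (z - x) * d = 0 -> z = x + N / d.
Proof. by move=> dn /eqP; rewrite subr_eq0 => /eqP ->; rewrite mulfK // addrC subrK. Qed.

Lemma prop0 {a b e d : R} : d = 0 -> b != 0 -> a * b - e * d = 0 -> a = 0.
Proof. by move=> -> bn; rewrite mulr0 subr0 => /eqP; rewrite mulf_eq0 (negbTE bn) orbF => /eqP. Qed.

Lemma local (xm3 xm2 xm1 x0 x1 x2 ym2 ym1 y0 y1 y2 zm2 zm1 z0 z1 : R) :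
  (xm1 - xm2) * (ym2 - xm2) - (zm2 - xm2) * (xm3 - xm2) = 0 ->
  (x0 - xm1) * (ym1 - xm1) - (zm1 - xm1) * (xm2 - xm1) = 0 ->
  (x1 - x0) * (y0 - x0) - (z0 - x0) * (xm1 - x0) = 0 ->
  (x2 - x1) * (y1 - x1) - (z1 - x1) * (x0 - x1) = 0 ->
  xm1 - y0 != 0 -> y1 - x0 != 0 -> ym1 - xm2 != 0 ->
  x0 - y1 != 0 -> y2 - x1 != 0 -> y0 - xm1 != 0 ->
  zm1 - x0 != 0 -> x1 - z0 != 0 -> xm1 - zm2 != 0 ->
  z0 - x1 != 0 -> x2 - z1 != 0 -> x0 - zm1 != 0 ->
  ym2 - xm3 != 0 ->
  f1 x0 xm1 xm2 ym1 y0 y1 = f2 z1 z0 zm1 x0 x1 x2 /\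
  (- (y0 - x0) - (x1 - x0) + (xm1 - x0) + (z0 - x0)) * f1 x0 xm1 xm2 ym1 y0 y1
  + (y0 - x0) * f1 x1 x0 xm1 y0 y1 y2 + (x1 - x0) * f2 x1 x0 xm1 y0 y1 y2
  - (xm1 - x0) * f1 z0 zm1 zm2 xm1 x0 x1 - (z0 - x0) * f2 z0 zm1 zm2 xm1 x0 x1 = 0.
Proof.
move=> E2 E1 E0 E3 h1 h2 h3 h4 h5 h6 h7 h8 h9 h10 h11 h12 h13.
have [d1|d1] := eqVneq (xm3 - xm2) 0.
  have e1 : xm3 = xm2 by apply/eqP; rewrite -subr_eq0 d1.
  have b1 : ym2 - xm2 != 0 by rewrite -e1.
  have /eqP := prop0 d1 b1 E2; rewrite subr_eq0 => /eqP e2.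
  have d2 : xm2 - xm1 = 0 by rewrite e2 subrr.
  have b2 : ym1 - xm1 != 0 by rewrite e2.
  have /eqP := prop0 d2 b2 E1; rewrite subr_eq0 => /eqP e3.
  have d3 : xm1 - x0 = 0 by rewrite e3 subrr.
  have b3 : y0 - x0 != 0 by rewrite e3.
  have /eqP := prop0 d3 b3 E0; rewrite subr_eq0 => /eqP e4.
  have d4 : x0 - x1 = 0 by rewrite e4 subrr.
  have b4 : y1 - x1 != 0 by rewrite e4.
  have /eqP := prop0 d4 b4 E3; rewrite subr_eq0 => /eqP e5.
  subst x2 x1 x0 xm1 xm2.
  split; [apply: row1_deg | apply: row2_deg]; by [].
have [d2|d2] := eqVneq (xm2 - xm1) 0.
  have e : xm1 = xm2 by apply/eqP; rewrite eq_sym -subr_eq0 d2.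
  move: E2; rewrite e subrr mul0r sub0r => /eqP; rewrite oppr_eq0.
  rewrite mulf_eq0 (negbTE d1) orbF subr_eq0 => /eqP ez.
  by move: h9; rewrite e ez subrr eqxx.
have [d3|d3] := eqVneq (xm1 - x0) 0.
  have e : x0 = xm1 by apply/eqP; rewrite eq_sym -subr_eq0 d3.
  move: E1; rewrite e subrr mul0r sub0r => /eqP; rewrite oppr_eq0.
  rewrite mulf_eq0 (negbTE d2) orbF subr_eq0 => /eqP ez.
  by move: h7; rewrite e ez subrr eqxx.
have [d4|d4] := eqVneq (x0 - x1) 0.
  have e : x1 = x0 by apply/eqP; rewrite eq_sym -subr_eq0 d4.
  move: E0; rewrite e subrr mul0r sub0r => /eqP; rewrite oppr_eq0.
  rewrite mulf_eq0 (negbTE d3) orbF subr_eq0 => /eqP ez.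
  by move: h8; rewrite e ez subrr eqxx.
have z2 := solz d1 E2; have z3 := solz d2 E1; have z4 := solz d3 E0; have z5 := solz d4 E3.
split; [apply: row1_gen | apply: (row2_gen xm3 xm2 xm1 x0 x1 ym2 ym1 y0 y1 y2 zm2 zm1 z0)]; assumption.
Qed.
End S.

Lemma ns {R : numFieldType} {a b : R} : a != b -> a - b != 0.
Proof. by rewrite subr_eq0. Qed.



Lemma r1 (k : int) : k + 1 - 1 = k. Proof. exact: addrK. Qed.
Lemma r2 (k : int) : k - 1 + 1 = k. Proof. exact: subrK. Qed.
Lemma r3 (k : int) : k + 0 = k. Proof. exact: addr0. Qed.
Lemma r4 (k : int) : k + 2 - 1 = k + 1. Proof. by rewrite -addrA. Qed.
Lemma r5 (k : int) : k + 1 + 1 = k + 2. Proof. by rewrite -addrA. Qed.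
Lemma r6 (k : int) : k + 1 - 2 = k - 1. Proof. by rewrite -addrA. Qed.
Lemma r7 (k : int) : k - 2 + 1 = k - 1. Proof. by rewrite -addrA. Qed.
Lemma r8 (k : int) : k - 2 - 1 = k - 3. Proof. by rewrite -addrA. Qed.
Lemma r9 (k : int) : k - 1 - 1 = k - 2. Proof. by rewrite -addrA. Qed.
Lemma r10 (k : int) : k - 1 - 2 = k - 3. Proof. by rewrite -addrA. Qed.
Ltac norm := do 4 rewrite ?r1 ?r2 ?r3 ?r4 ?r5 ?r6 ?r7 ?r8 ?r9 ?r10.

Theorem mainTheorem9 (R : numFieldType) (u v : field R) :
  is_solution u v ->
  flow_t2_defined u v ->
  forall n m : int, sym_expr (@flow_t2 R) u v n m = 0.
Proof.
move=> Hs Hd n m.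
have Hv : forall a b, v a b = u (a - 1) (b - 1).
  move=> a b; have [h _] := Hs (a - 1) (b - 1).
  by move: h; rewrite /Q1 !subrK => /eqP; rewrite subr_eq0 => /eqP ->.
have E2 := (Hs (n - 2) m).2; rewrite /Q2 !Hv in E2.
have E1 := (Hs (n - 1) m).2; rewrite /Q2 !Hv in E1.
have E0 := (Hs n m).2; rewrite /Q2 !Hv in E0.
have E3 := (Hs (n + 1) m).2; rewrite /Q2 !Hv in E3.
have [Da [Db Dc]] := Hd n m.
have [Dd [De Df]] := Hd (n + 1) m.
have [Dg [Dh Di]] := Hd n (m + 1).
have [Dj [Dk Dl]] := Hd (n + 1) (m + 1).
have [_ [_ Dm]] := Hd (n - 1) m.
rewrite !Hv in Da Db Dc Dd De Df Dg Dh Di Dj Dk Dl Dm.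
norm.
move: E2 E1 E0 E3 Da Db Dc Dd De Df Dg Dh Di Dj Dk Dl Dm. norm.
move=> E2 E1 E0 E3 Da Db Dc Dd De Df Dg Dh Di Dj Dk Dl Dm.
apply/matrixP => i j; rewrite !mxE !big_ord_recr !big_ord0 !mxE /=.
rewrite !Hv.
norm.
have [L1 L2] := @local R (u (n-3) m) (u (n-2) m) (u (n-1) m) (u n m) (u (n+1) m) (u (n+2) m)
  (u (n-2) (m-1)) (u (n-1) (m-1)) (u n (m-1)) (u (n+1) (m-1)) (u (n+2) (m-1))
  (u (n-2) (m+1)) (u (n-1) (m+1)) (u n (m+1)) (u (n+1) (m+1))
  E2 E1 E0 E3 (ns Da) (ns Db) (ns Dc) (ns Dd) (ns De) (ns Df) (ns Dg) (ns Dh) (ns Di)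
  (ns Dj) (ns Dk) (ns Dl) (ns Dm).
rewrite /f1 /f2 in L1 L2.
case: i => [[|[|//]] ?] /=.
- rewrite !mul0r !mul1r !addr0 !add0r mulN1r.
  by rewrite L1 subrr.
- apply: (etrans _ L2); ring.
Qed.
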